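(* Let $I$ be a set with a non-trivial ultrafilter $\mathcal U$, $n\in\mathbb{N}$, $r>0$, and for each $i\in I$ let $E_i$ be an order continuous Banach lattice with a weak unit and $M_i$ an $(n,r)$-dispersed closed subspace of $E_i$. Then $(M_i)_{\mathcal U}$ is an $(n,r)$-dispersed subspace of $(E_i)_{\mathcal U}$.
   Context: A Banach lattice is order continuous if every net decreasing in order to $0$ converges in norm to $0$; $e\ge0$ is a weak unit if $|x|\wedge e=0$ implies $x=0$. Ultraproducts: $(X_i)_{\mathcal U}=\ell_\infty(I,X_i)/\{(x_i):\lim_{\mathcal U}\|x_i\|=0\}$, a Banach lattice when the $X_i$ are, with $[(x_i)]\le[(y_i)]$ iff there is $(z_i)$ with $\lim_{\mathcal U}\|z_i\|=0$ and $x_i+z_i\le y_i$ for all $i$; $(M_i)_{\mathcal U}$ is identified with the closed subspace $\{[(x_i)]: x_i\in M_i\}$ of $(E_i)_{\mathcal U}$. A closed subspace $M$ of a Banach lattice $F$ is $(n,r)$-dispersed if for every pairwise disjoint family $x_1,\dots,x_n$ of norm-one vectors of $F$ there is $i\in\{1,\dots,n\}$ with $\mathrm{dist}(x_i,M)\ge r$. *)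

(* Defs.v *)
From HB Require Import structures.
From mathcomp Require Import all_boot all_order all_algebra.
From mathcomp Require Import all_classical all_reals all_analysis.
Set Implicit Arguments. Unset Strict Implicit. Unset Printing Implicit Defensive.
Import Order.TTheory GRing.Theory Num.Theory.
Import numFieldNormedType.Exports.
Local Open Scope classical_set_scope.
Local Open Scope ring_scope.

Section BanachLattice.
Variables (R : realType) (E : completeNormedModType R).
Variables (le : E -> E -> Prop) (join : E -> E -> E).

Definition lmeet (x y : E) : E := - join (- x) (- y).
Definition labs (x : E) : E := join x (- x).

Definition is_banach_lattice : Prop :=
  (forall x, le x x) /\
  (forall x y, le x y -> le y x -> x = y) /\
  (forall x y z, le x y -> le y z -> le x z) /\
  (forall x y z, le x y -> le (x + z) (y + z)) /\
  (forall (a : R) x y, 0 <= a -> le x y -> le (a *: x) (a *: y)) /\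
  (forall x y, [/\ le x (join x y), le y (join x y) &
                   forall z, le x z -> le y z -> le (join x y) z]) /\
  (forall x y, le (labs x) (labs y) -> `|x| <= `|y|).

Definition order_continuous : Prop :=
  forall (D : Type) (leD : D -> D -> Prop) (x : D -> E),
    (exists d : D, True) ->
    (forall d, leD d d) ->
    (forall d1 d2 d3, leD d1 d2 -> leD d2 d3 -> leD d1 d3) ->
    (forall d1 d2, exists d3, leD d1 d3 /\ leD d2 d3) ->
    (forall d1 d2, leD d1 d2 -> le (x d2) (x d1)) ->
    (forall d, le 0 (x d)) ->
    (forall z, (forall d, le z (x d)) -> le z 0) ->
    forall eps : R, 0 < eps -> exists d0, forall d, leD d0 d -> `|x d| < eps.

Definition has_weak_unit : Prop :=
  exists e : E, le 0 e /\ forall x, lmeet (labs x) e = 0 -> x = 0.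

Definition closed_subspace (M : set E) : Prop :=
  [/\ closed M, M 0,
      (forall x y, M x -> M y -> M (x + y)) &
      (forall (a : R) x, M x -> M (a *: x))].

(* (n,r)-dispersed closed subspace M (indices {1..n} rendered as 'I_n);
   dist(x, M) >= r  is  forall m in M, r <= |x - m| *)
Definition dispersed (n : nat) (r : R) (M : set E) : Prop :=
  forall x : 'I_n -> E,
    (forall k l, k != l -> lmeet (labs (x k)) (labs (x l)) = 0) ->
    (forall k, `|x k| = 1) ->
    exists k, forall m, M m -> r <= `|x k - m|.
End BanachLattice.

Section Ultra.
Variables (I : Type).

Definition ultrafilter_on (U : set (set I)) : Prop :=
  [/\ U setT, ~ U set0,
      (forall A B, U A -> U B -> U (A `&` B)),
      (forall A B, A `<=` B -> U A -> U B) &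
      (forall A, U A \/ U (~` A))].

Definition nontrivial_ultrafilter (U : set (set I)) : Prop :=
  ultrafilter_on U /\ forall i : I, ~ U [set i].

Definition Ulim (R : realType) (U : set (set I)) (f : I -> R) (l : R) : Prop :=
  forall eps : R, 0 < eps -> U [set i | `|f i - l| < eps].

Definition bounded_fam (R : realType) (E : I -> normedModType R)
  (x : forall i, E i) : Prop := exists C : R, forall i, `|x i| <= C.

(* Elements of the ultraproduct are
   represented by bounded families; the ultraproduct norm of [(x_i)] is
   lim_U |x_i|; [(x_i)] = 0 iff lim_U |x_i| = 0; lattice operations are
   computed coordinatewise; (M_i)_U = {[(m_i)] : m_i in M_i}. *)
Definition ultra_dispersed (R : realType) (U : set (set I))
  (E : I -> completeNormedModType R) (join : forall i, E i -> E i -> E i)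
  (M : forall i, set (E i)) (n : nat) (r : R) : Prop :=
  forall x : 'I_n -> forall i, E i,
    (forall k, bounded_fam (x k)) ->
    (forall k l, k != l ->
       Ulim U (fun i => `| lmeet (join i) (labs (join i) (x k i))
                                         (labs (join i) (x l i)) |) 0) ->
    (forall k, Ulim U (fun i => `|x k i|) 1) ->
    exists k, forall m : forall i, E i,
      bounded_fam m -> (forall i, M i (m i)) ->
      forall d : R, Ulim U (fun i => `|x k i - m i|) d -> r <= d.
End Ultra.

(* Main.v *)
Require Import Defs.
From HB Require Import structures.
From mathcomp Require Import all_boot all_order all_algebra.
From mathcomp Require Import all_classical all_reals all_analysis.
From mathcomp Require Import ring lra.
Import Order.TTheory GRing.Theory Num.Theory.
Import numFieldNormedType.Exports.
Local Open Scope classical_set_scope.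
Local Open Scope ring_scope.

Lemma zid (V : zmodType) (a b c d : V) : a - b - (c - d) = a - c - (b - d).
Proof. by rewrite !opprB addrACA [RHS]addrACA [- b + _]addrC. Qed.

Section Lat.
Variables (R : realType) (E : completeNormedModType R).
Variables (le : E -> E -> Prop) (join : E -> E -> E).
Hypothesis H : is_banach_lattice le join.

Local Notation meet := (lmeet join).
Local Notation abs := (labs join).
Local Notation pos z := (join z 0).

Lemma lrefl x : le x x. Proof. by case: H => h _; apply: h. Qed.
Lemma lanti x y : le x y -> le y x -> x = y. Proof. by case: H => _ [h _]; apply: h. Qed.
Lemma ltrans y x z : le x y -> le y z -> le x z.
Proof. by case: H => _ [_ [h _]]; apply: h. Qed.
Lemma laddr z x y : le x y -> le (x + z) (y + z).
Proof. by case: H => _ [_ [_ [h _]]]; apply: h. Qed.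
Lemma lscale (a : R) x y : 0 <= a -> le x y -> le (a *: x) (a *: y).
Proof. by case: H => _ [_ [_ [_ [h _]]]]; apply: h. Qed.
Lemma ljoinl x y : le x (join x y).
Proof. by case: H => _ [_ [_ [_ [_ [h _]]]]]; case: (h x y). Qed.
Lemma ljoinr x y : le y (join x y).
Proof. by case: H => _ [_ [_ [_ [_ [h _]]]]]; case: (h x y). Qed.
Lemma ljoin_lub x y z : le x z -> le y z -> le (join x y) z.
Proof. by case: H => _ [_ [_ [_ [_ [h _]]]]]; case: (h x y) => _ _; apply. Qed.
Lemma lnorm x y : le (abs x) (abs y) -> `|x| <= `|y|.
Proof. by case: H => _ [_ [_ [_ [_ [_ h]]]]]; apply: h. Qed.

Lemma laddl z x y : le x y -> le (z + x) (z + y).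
Proof. by rewrite ![z + _]addrC; apply: laddr. Qed.
Lemma ladd a b c d : le a b -> le c d -> le (a + c) (b + d).
Proof. move=> h1 h2; apply: (ltrans (b + c)); [exact: laddr | exact: laddl]. Qed.
Lemma lopp x y : le x y -> le (-y) (-x).
Proof.
move=> h; have := laddr (-x - y) _ _ h.
by rewrite addrA subrr add0r [y + _]addrC subrK.
Qed.
Lemma lsubl x y : le 0 (y - x) -> le x y.
Proof. by move=> h; have := laddr x _ _ h; rewrite add0r subrK. Qed.
Lemma lsubr x y : le x y -> le 0 (y - x).
Proof. by move=> h; have := laddr (- x) _ _ h; rewrite subrr. Qed.

Lemma ljoinC x y : join x y = join y x.
Proof. by apply: lanti; apply: ljoin_lub; first [apply: ljoinl | apply: ljoinr]. Qed.
Lemma ljoin_idl x y : le y x -> join x y = x.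
Proof. by move=> h; apply: lanti; [apply: ljoin_lub => //; apply: lrefl | apply: ljoinl]. Qed.
Lemma ljoin_mono x x' y y' : le x x' -> le y y' -> le (join x y) (join x' y').
Proof.
move=> h1 h2; apply: ljoin_lub.
  by apply: (ltrans x') => //; apply: ljoinl.
by apply: (ltrans y') => //; apply: ljoinr.
Qed.
Lemma ljoinD z x y : join (x + z) (y + z) = join x y + z.
Proof.
apply: lanti.
  by apply: ljoin_lub; apply: laddr; [apply: ljoinl | apply: ljoinr].
set J := join (x + z) (y + z).
suff h : le (join x y) (J - z) by have := laddr z _ _ h; rewrite subrK.
apply: ljoin_lub.
  by have := laddr (- z) _ _ (ljoinl (x + z) (y + z)); rewrite addrK.
by have := laddr (- z) _ _ (ljoinr (x + z) (y + z)); rewrite addrK.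
Qed.

Lemma lmeetE x y : meet x y = - join (- x) (- y). Proof. by []. Qed.
Lemma lmeetl x y : le (meet x y) x.
Proof. by rewrite lmeetE; have := lopp _ _ (ljoinl (-x) (-y)); rewrite opprK. Qed.
Lemma lmeetr x y : le (meet x y) y.
Proof. by rewrite lmeetE; have := lopp _ _ (ljoinr (-x) (-y)); rewrite opprK. Qed.
Lemma lmeet_glb x y z : le z x -> le z y -> le z (meet x y).
Proof.
move=> h1 h2; rewrite lmeetE.
have h : le (join (-x) (-y)) (- z) by apply: ljoin_lub; apply: lopp.
by have := lopp _ _ h; rewrite opprK.
Qed.
Lemma lmeetC x y : meet x y = meet y x.
Proof. by rewrite !lmeetE ljoinC. Qed.
Lemma lmeet_mono x x' y y' : le x x' -> le y y' -> le (meet x y) (meet x' y').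
Proof.
move=> h1 h2; apply: lmeet_glb.
  by apply: (ltrans x) => //; apply: lmeetl.
by apply: (ltrans y) => //; apply: lmeetr.
Qed.
Lemma lmeetD z x y : meet (x + z) (y + z) = meet x y + z.
Proof. by rewrite !lmeetE !opprD ljoinD opprD opprK. Qed.
Lemma lmeet_join x y : meet x y = x + y - join x y.
Proof.
rewrite lmeetE.
have := ljoinD (- (x + y)) y x.
have -> : y - (x + y) = - x by rewrite opprD addrCA subrr addr0.
have -> : x - (x + y) = - y by rewrite opprD addrA subrr add0r.
by move=> ->; rewrite ljoinC opprD opprK addrC.
Qed.

Lemma pos_opp z : pos (- z) = pos z - z.
Proof. by have := ljoinD (- z) 0 z; rewrite add0r subrr [join 0 z]ljoinC. Qed.
Lemma pos_sub z : pos z - pos (- z) = z.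
Proof. by rewrite pos_opp opprB addrC subrK. Qed.
Lemma pos_meet0 z : meet (pos z) (pos (- z)) = 0.
Proof.
rewrite pos_opp.
have := lmeetD (pos z) 0 (- z); rewrite add0r addrC => ->.
rewrite lmeetE oppr0 opprK [join 0 z]ljoinC.
by rewrite addNr.
Qed.

Lemma labs_ge0 x : le 0 (abs x).
Proof.
set j := abs x.
have h1 : le x j by apply: ljoinl.
have h2 : le (- x) j by apply: ljoinr.
have h3 : le 0 (j + j).
  have := ladd _ _ _ _ h1 h2; by rewrite subrr.
have h2p : (0:R) <= 2^-1 by rewrite invr_ge0.
have := lscale (2^-1) _ _ h2p h3.
have e2 : (2^-1 : R) + 2^-1 = 1 by field.
by rewrite scaler0 scalerDr -scalerDl e2 scale1r.
Qed.
Lemma pos_ge0 z : le 0 (pos z). Proof. exact: ljoinr. Qed.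
Lemma lmeet_ge0 a b : le 0 a -> le 0 b -> le 0 (meet a b).
Proof. exact: lmeet_glb. Qed.
Lemma lopp_le0 a : le 0 a -> le (- a) 0.
Proof. by move=> h; have := lopp _ _ h; rewrite oppr0. Qed.
Lemma labs_pos a : le 0 a -> abs a = a.
Proof. move=> h; apply: ljoin_idl; apply: (ltrans 0) => //; exact: lopp_le0. Qed.
Lemma pos_le_abs x : le (pos x) (abs x).
Proof. apply: ljoin_lub; [exact: ljoinl | exact: labs_ge0]. Qed.
Lemma neg_le_abs x : le (pos (- x)) (abs x).
Proof. apply: ljoin_lub; [exact: ljoinr | exact: labs_ge0]. Qed.
Lemma pos_mono a b : le a b -> le (pos a) (pos b).
Proof. move=> h; apply: ljoin_mono => //; exact: lrefl. Qed.
Lemma abs_sub_le p q : le 0 p -> le 0 q -> le (abs (p - q)) (p + q).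
Proof.
move=> hp hq; apply: ljoin_lub.
  apply: laddl; apply: (ltrans 0) => //; exact: lopp_le0.
rewrite opprB addrC; apply: laddr; apply: (ltrans 0) => //; exact: lopp_le0.
Qed.
Lemma norm_mono z b : le 0 b -> le (abs z) b -> `|z| <= `|b|.
Proof. by move=> h0 h; apply: lnorm; rewrite [abs b]labs_pos. Qed.
Lemma norm_mono0 a b : le 0 a -> le a b -> `|a| <= `|b|.
Proof.
move=> ha hab; apply: norm_mono; first exact: (ltrans a).
by rewrite labs_pos.
Qed.

Lemma riesz a b c : le 0 a -> le 0 b -> le 0 c ->
  le (meet a (b + c)) (meet a b + meet a c).
Proof.
move=> ha hb hc; set t := meet a (b + c).
suff h : le (t - meet a b) (meet a c).
  by have := laddr (meet a b) _ _ h; rewrite subrK addrC.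
have -> : t - meet a b = join (- a + t) (- b + t) by rewrite ljoinD lmeetE opprK addrC.
apply: ljoin_lub.
  apply: (ltrans 0); last exact: lmeet_ge0.
  by have := laddl (- a) _ _ (lmeetl a (b + c)); rewrite addNr.
apply: lmeet_glb.
  apply: (ltrans t); last exact: lmeetl.
  by have := laddr t _ _ (lopp_le0 _ hb); rewrite add0r.
by have := laddl (- b) _ _ (lmeetr a (b + c)); rewrite addKr.
Qed.

Lemma sum_ge0 (T : Type) (s : seq T) (P : pred T) (F : T -> E) :
  (forall l, P l -> le 0 (F l)) -> le 0 (\sum_(l <- s | P l) F l).
Proof.
move=> h; apply: big_rec; first exact: lrefl.
by move=> i y Pi hy; have := ladd _ _ _ _ (h i Pi) hy; rewrite addr0.
Qed.

Lemma riesz_sum (T : Type) (s : seq T) (P : pred T) (F : T -> E) a :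
  le 0 a -> (forall l, P l -> le 0 (F l)) ->
  le (meet a (\sum_(l <- s | P l) F l)) (\sum_(l <- s | P l) meet a (F l)).
Proof.
move=> ha h.
suff : le 0 (\sum_(l <- s | P l) F l) /\
  le (meet a (\sum_(l <- s | P l) F l)) (\sum_(l <- s | P l) meet a (F l)) by case.
apply: (big_rec2 (fun s1 s2 => le 0 s1 /\ le (meet a s1) s2)).
  split; [exact: lrefl | exact: lmeetr].
move=> i y1 y2 Pi [h1 h2]; split.
  by have := ladd _ _ _ _ (h i Pi) h1; rewrite addr0.
apply: (ltrans (meet a (F i) + meet a y1)); first by apply: riesz => //; apply: h.
by apply: laddl.
Qed.

Lemma ljoinZ (c : R) x y : 0 < c -> join (c *: x) (c *: y) = c *: join x y.
Proof.
move=> hc; apply: lanti.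
  by apply: ljoin_lub; apply: lscale; rewrite ?ltW //; [apply: ljoinl | apply: ljoinr].
set K := join (c *: x) (c *: y).
suff h : le (join x y) (c^-1 *: K).
  have := lscale c _ _ (ltW hc) h.
  by rewrite scalerA mulfV ?scale1r // gt_eqF.
have hc' : 0 <= c^-1 by rewrite invr_ge0 ltW.
apply: ljoin_lub.
  have := lscale _ _ _ hc' (ljoinl (c *: x) (c *: y)).
  by rewrite scalerA mulVf ?scale1r // gt_eqF.
have := lscale _ _ _ hc' (ljoinr (c *: x) (c *: y)).
by rewrite scalerA mulVf ?scale1r // gt_eqF.
Qed.
Lemma labsZ (c : R) x : 0 <= c -> abs (c *: x) = c *: abs x.
Proof.
rewrite le_eqVlt => /orP [/eqP <-|hc].
  by rewrite !scale0r /labs oppr0 ljoin_idl //; exact: lrefl.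
by rewrite /labs -scalerN ljoinZ.
Qed.
Lemma lmeetZ (c : R) x y : 0 < c -> meet (c *: x) (c *: y) = c *: meet x y.
Proof. by move=> hc; rewrite !lmeetE -!scalerN ljoinZ // scalerN. Qed.

Lemma disj_scale a b (c c' : R) : meet (abs a) (abs b) = 0 -> 0 <= c -> 0 <= c' ->
  meet (abs (c *: a)) (abs (c' *: b)) = 0.
Proof.
move=> h hc hc'; rewrite !labsZ //.
have hs : 0 < c + c' + 1 by lra.
apply: lanti; last first.
  apply: lmeet_ge0.
    by have := lscale _ _ _ hc (labs_ge0 a); rewrite scaler0.
  by have := lscale _ _ _ hc' (labs_ge0 b); rewrite scaler0.
apply: (ltrans (meet ((c + c' + 1) *: abs a) ((c + c' + 1) *: abs b))).
  apply: lmeet_mono; apply: lsubl; rewrite -scalerBl.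
    by have := lscale (c + c' + 1 - c) _ _ ltac:(lra) (labs_ge0 a); rewrite scaler0.
  by have := lscale (c + c' + 1 - c') _ _ ltac:(lra) (labs_ge0 b); rewrite scaler0.
rewrite lmeetZ // h scaler0; exact: lrefl.
Qed.

Lemma pos_diff u w : u - pos (u - w) = meet u w.
Proof.
have := ljoinD (- w) u w; rewrite subrr => ->.
by rewrite lmeet_join opprB addrA.
Qed.

Lemma disj4 p q p' q' P Q : le 0 p -> le 0 q -> le 0 p' -> le 0 q' ->
  le p P -> le q P -> le p' Q -> le q' Q -> meet P Q = 0 ->
  meet (p + q) (p' + q') = 0.
Proof.
move=> hp hq hp' hq' h1 h2 h3 h4 h0.
have hpq : le 0 (p + q) by have := ladd _ _ _ _ hp hq; rewrite addr0.
apply: lanti; last by apply: lmeet_ge0 => //; have := ladd _ _ _ _ hp' hq'; rewrite addr0.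
have hm : forall a b, le a P -> le b Q -> le (meet b a) 0.
  by move=> a b ha hb; rewrite -h0 lmeetC; apply: lmeet_mono.
apply: (ltrans _ _ _ (riesz _ _ _ hpq hp' hq')).
rewrite -[0](addr0 0); apply: ladd.
  rewrite lmeetC; apply: (ltrans _ _ _ (riesz _ _ _ hp' hp hq)).
  by rewrite -[0](addr0 0); apply: ladd; apply: hm.
rewrite lmeetC; apply: (ltrans _ _ _ (riesz _ _ _ hq' hp hq)).
by rewrite -[0](addr0 0); apply: ladd; apply: hm.
Qed.

Section Fam.
Variables (n : nat) (x : 'I_n -> E).
Definition Wf k := \sum_(l | l != k) abs (x l).
Definition yf k := pos (pos (x k) - Wf k) - pos (pos (- x k) - Wf k).

Lemma W_ge0 k : le 0 (Wf k).
Proof. by apply: sum_ge0 => l _; apply: labs_ge0. Qed.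
Lemma W_ge k l : l != k -> le (abs (x l)) (Wf k).
Proof.
move=> hlk; rewrite /Wf (bigD1 l) //=.
have h : le 0 (\sum_(i | (i != k) && (i != l)) abs (x i)).
  by apply: sum_ge0 => i _; apply: labs_ge0.
by have := laddl (abs (x l)) _ _ h; rewrite addr0.
Qed.

Lemma y_disj k l : k != l -> meet (abs (yf k)) (abs (yf l)) = 0.
Proof.
move=> hkl.
have hyle : forall k0 l0, l0 != k0 ->
  [/\ le 0 (pos (pos (x k0) - Wf k0)), le 0 (pos (pos (- x k0) - Wf k0)),
      le (pos (pos (x k0) - Wf k0)) (pos (abs (x k0) - abs (x l0))),
      le (pos (pos (- x k0) - Wf k0)) (pos (abs (x k0) - abs (x l0))) &
      le (abs (yf k0)) (pos (pos (x k0) - Wf k0) + pos (pos (- x k0) - Wf k0))].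
  move=> k0 l0 hlk; split; try exact: pos_ge0.
  - apply: pos_mono; apply: ladd; [exact: pos_le_abs | apply: lopp; exact: W_ge].
  - apply: pos_mono; apply: ladd; [exact: neg_le_abs | apply: lopp; exact: W_ge].
  - by apply: abs_sub_le; apply: pos_ge0.
have [a1 a2 a3 a4 a5] := hyle k l ltac:(by rewrite eq_sym).
have [b1 b2 b3 b4 b5] := hyle l k hkl.
apply: lanti; last by apply: lmeet_ge0; apply: labs_ge0.
rewrite -(disj4 _ _ _ _ _ _ a1 a2 b1 b2 a3 a4 b3 b4).
  by apply: lmeet_mono.
by rewrite -[abs (x l) - abs (x k)]opprB pos_meet0.
Qed.

Lemma y_near k : `|x k - yf k| <= 2 * \sum_(l | l != k) `|meet (abs (x k)) (abs (x l))|.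
Proof.
set S := \sum_(l | l != k) meet (abs (x k)) (abs (x l)).
have hS0 : le 0 S by apply: sum_ge0 => l _; apply: lmeet_ge0; apply: labs_ge0.
have hmS : le (meet (abs (x k)) (Wf k)) S.
  by apply: riesz_sum => [|l _]; apply: labs_ge0.
have e : x k - yf k = meet (pos (x k)) (Wf k) - meet (pos (- x k)) (Wf k).
  by rewrite -!pos_diff /yf -{1}(pos_sub (x k)) zid.
have hs0 : le 0 (meet (pos (x k)) (Wf k)) by apply: lmeet_ge0; [apply: pos_ge0 | apply: W_ge0].
have ht0 : le 0 (meet (pos (- x k)) (Wf k)) by apply: lmeet_ge0; [apply: pos_ge0 | apply: W_ge0].
have hs : le (meet (pos (x k)) (Wf k)) S.
  apply: ltrans hmS; apply: lmeet_mono; [exact: pos_le_abs | exact: lrefl].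
have ht : le (meet (pos (- x k)) (Wf k)) S.
  apply: ltrans hmS; apply: lmeet_mono; [exact: neg_le_abs | exact: lrefl].
have h1 : `|x k - yf k| <= `|S + S|.
  apply: norm_mono; first by have := ladd _ _ _ _ hS0 hS0; rewrite addr0.
  rewrite e; apply: (ltrans _ _ _ (abs_sub_le _ _ hs0 ht0)); exact: ladd.
have h2 := ler_normD S S.
have h3 : `|S| <= \sum_(l | l != k) `|meet (abs (x k)) (abs (x l))| by apply: ler_norm_sum.
lra.
Qed.
End Fam.
End Lat.

Section UF.
Context {I : Type} {U : set (set I)}.
Hypothesis hU : ultrafilter_on U.

Lemma U_mono {A B} : U A -> A `<=` B -> U B.
Proof. by move=> hA hAB; case: hU => _ _ _ h _; apply: h hA. Qed.
Lemma U_inter {A B} : U A -> U B -> U (A `&` B).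
Proof. by case: hU => _ _ h _ _; apply: h. Qed.
Lemma U_T : U setT. Proof. by case: hU. Qed.
Lemma U_ex {A} : U A -> exists i, A i.
Proof.
move=> hA; apply: contrapT => hne.
have eA : A = set0.
  by apply/seteqP; split=> i //= Ai; apply: hne; exists i.
by case: hU => _ h0 _ _ _; apply: h0; rewrite -eA.
Qed.
Lemma U_big (T : eqType) (s : seq T) (B : T -> set I) :
  (forall j, j \in s -> U (B j)) -> U [set i | forall j, j \in s -> B j i].
Proof.
elim: s => [|a s IH] h.
  by apply: (U_mono U_T) => i _ j; rewrite in_nil.
have ha := h a (mem_head a s).
have hs : U [set i | forall j, j \in s -> B j i].
  by apply: IH => j hj; apply: h; rewrite in_cons hj orbT.
apply: (U_mono (U_inter ha hs)) => i [hai hsi] j.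
by rewrite in_cons => /orP [/eqP -> // | hj]; apply: hsi.
Qed.
Lemma U_part {N : nat} (f : I -> 'I_N) {A} : U A ->
  exists k, U (A `&` [set i | f i = k]).
Proof.
move=> hA; apply: contrapT => hne.
have hc : forall k, U (~` (A `&` [set i | f i = k])).
  move=> k; case: hU => _ _ _ _ hcomp.
  case: (hcomp (A `&` [set i | f i = k])) => // hk; exfalso; apply: hne; by exists k.
have := U_inter hA (@U_big _ (enum 'I_N) (fun k => ~` (A `&` [set i | f i = k]))
  (fun k _ => hc k)).
case: hU => _ h0 _ _ _.
suff -> : A `&` [set i | forall j, j \in enum 'I_N -> (~` (A `&` [set i | f i = j])) i] = set0 by [].
apply/seteqP; split => i //= [Ai Hi].
by apply: (Hi (f i)); [rewrite mem_enum | split].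
Qed.
End UF.

Theorem proposition5p9 (R : realType) (I : Type) (U : set (set I)) (n : nat)
  (r : R) (E : I -> completeNormedModType R)
  (le : forall i, E i -> E i -> Prop) (join : forall i, E i -> E i -> E i)
  (M : forall i, set (E i)) :
  nontrivial_ultrafilter U -> 0 < r ->
  (forall i, is_banach_lattice (le i) (join i)) ->
  (forall i, order_continuous (le i)) ->
  (forall i, has_weak_unit (le i) (join i)) ->
  (forall i, closed_subspace (M i)) ->
  (forall i, dispersed (join i) n r (M i)) ->
  ultra_dispersed U join M n r.
Proof.
move=> [hUf _] hr hBL _ _ hM.
case: n => [|N] hD.
  have no0 : 'I_0 -> False by case=> m; rewrite ltn0.
  have [i0 _] := U_ex hUf (U_T hUf).
  have [k _] := hD i0 (fun _ => 0) (fun k => False_ind _ (no0 k)) (fun k => False_ind _ (no0 k)).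
  by case: (no0 k).
move=> x hb hdisj hnorm.
pose y i k := @yf _ _ (join i) _ (fun l => x l i) k.
have hyn : forall i k, `|x k i - y i k| <=
   2 * \sum_(l | l != k) `|lmeet (join i) (labs (join i) (x k i)) (labs (join i) (x l i))|.
  by move=> i k; apply: (@y_near _ _ (le i) (join i) (hBL i) _ (fun l => x l i) k).
have hyd : forall i k l, k != l ->
    lmeet (join i) (labs (join i) (y i k)) (labs (join i) (y i l)) = 0.
  by move=> i k l hkl; apply: (@y_disj _ _ (le i) (join i) (hBL i) _ (fun l => x l i) k l hkl).
have Hxy : forall eps, 0 < eps -> U [set i | forall k, `|x k i - y i k| < eps].
  move=> eps he.
  pose e' := eps / (4 * N.+1%:R).
  have he' : 0 < e' by rewrite /e' divr_gt0 // mulr_gt0.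
  pose B := fun kl : 'I_N.+1 * 'I_N.+1 => [set i | kl.1 != kl.2 ->
     `|lmeet (join i) (labs (join i) (x kl.1 i)) (labs (join i) (x kl.2 i))| < e'].
  have hB : U [set i | forall j, j \in enum {: 'I_N.+1 * 'I_N.+1} -> B j i].
    apply: (U_big hUf) => kl _.
    case: (eqVneq kl.1 kl.2) => h.
      by apply: (U_mono hUf (U_T hUf)) => i _; rewrite /B /= h eqxx.
    apply: (U_mono hUf (hdisj _ _ h e' he')) => i /=; rewrite subr0 normr_id => hi _; exact: hi.
  apply: (U_mono hUf hB) => i hi k.
  apply: le_lt_trans (hyn i k) _.
  have hs : \sum_(l | l != k) `|lmeet (join i) (labs (join i) (x k i)) (labs (join i) (x l i))|
      <= e' *+ N.+1.
    rewrite big_mkcond /= -[N.+1 in X in _ <= X]card_ord -sumr_const.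
    apply: ler_sum => l _; case: ifP => hl; last exact: ltW.
    apply: ltW; apply: (hi (k, l)); first by rewrite mem_enum.
    by rewrite /= eq_sym hl.
  have e1 : e' *+ N.+1 = eps / 4 by rewrite -mulr_natr /e'; field.
  rewrite e1 in hs; lra.
have Hn : forall eps, 0 < eps -> U [set i | forall k, `| `|x k i| - 1| < eps].
  move=> eps he.
  apply: (U_mono hUf (@U_big _ _ hUf _ (enum 'I_N.+1) (fun k => [set i | `| `|x k i| - 1| < eps])
    (fun k _ => hnorm k eps he))).

  by move=> i hi k; apply: hi; rewrite mem_enum.
pose G := [set i | forall k, 0 < `|y i k|].
have h12 : (0 : R) < 1 / 2 by lra.
have hG : U G.
  apply: (U_mono hUf (U_inter hUf (Hxy _ h12) (Hn _ h12))) => i [h1 h2] k.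
  have := h1 k; have := h2 k; rewrite ltr_norml => /andP [h3 h4] h5.
  have := ler_normD (y i k) (x k i - y i k); rewrite addrC subrK.
  lra.
have hk : forall i, exists k : 'I_N.+1, G i -> forall m', M i m' ->
    r <= `| `|y i k|^-1 *: y i k - m'|.
  move=> i; case: (pselect (G i)) => Gi; last by exists ord0.
  have hdj : forall k l : 'I_N.+1, k != l ->
      lmeet (join i) (labs (join i) (`|y i k|^-1 *: y i k))
        (labs (join i) (`|y i l|^-1 *: y i l)) = 0.
    move=> k l hkl; apply: (@disj_scale _ _ _ _ (hBL i)); first exact: hyd.
      by rewrite invr_ge0.
    by rewrite invr_ge0.
  have hn1 : forall k : 'I_N.+1, `| `|y i k|^-1 *: y i k| = 1.
    move=> k; rewrite normrZ ger0_norm ?invr_ge0 // mulVf //.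
    by rewrite gt_eqF // (Gi k).
  have [k hk'] := hD i (fun k => `|y i k|^-1 *: y i k) hdj hn1.
  by exists k => _; exact: hk'.
have [kf hkf] := choice hk.
have [k hUk] := U_part hUf kf hG.
exists k => m hbm hMm d hd.
apply/ler_addgt0Pr => e he.
pose dl := e / (4 * (1 + r)).
have hdl : 0 < dl by rewrite /dl divr_gt0 // mulr_gt0 //; lra.
have := U_inter hUf (U_inter hUf hUk (Hxy dl hdl)) (U_inter hUf (Hn dl hdl) (hd dl hdl)).
case/(U_ex hUf) => i [[[Gi hki] hxy] [hn hdd]].
have hMi : M i (`|y i k|^-1 *: m i) by case: (hM i) => _ _ _ hsc; apply: hsc.
have := hkf i Gi _ hMi; rewrite /= hki -scalerBr normrZ ger0_norm ?invr_ge0 //.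
rewrite ler_pdivlMl ?(Gi k) // => hr'.
have eym : y i k - m i = (x k i - m i) - (x k i - y i k).
  by rewrite zid subrr sub0r opprB.
have h1 := ler_normB (x k i - m i) (x k i - y i k); rewrite -eym in h1.
have h2 := ler_normD (y i k) (x k i - y i k); rewrite addrC subrK in h2.
have := hxy k; have := hn k; rewrite !ltr_norml => /andP [h3 h4] h5.
move: hdd => /=; rewrite ltr_norml => /andP [h6 h7].
have hyge : 1 - 2 * dl <= `|y i k| by lra.
have h8 := ler_wpM2l (ltW hr) hyge.
have e1 : dl * (1 + r) = e / 4 by rewrite /dl; field; lra.
lra.
Qed.
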